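(* Let $\Gamma=((V,E),m)$ be an EAFC system with $V$ finite, $G=G_\Gamma$ and $S\subseteq V$. Then $QZ_G(G_S)=\bigcap_{s\in S}QZ_G(G_{\{s\}})$; that is, if $g\in G$ satisfies $gSg^{-1}=S$ then $gsg^{-1}=s$ for every $s\in S$. Moreover, for every $g\in N_G(G_S)\setminus G_S$ there exists $g'\in N_G(G_S)$ with $g'G_S=gG_S$ such that $g'$ commutes with every element of $G_S$.
   Context: An Artin–Tits system $\Gamma=((V,E),m)$ consists of a simplicial graph $(V,E)$ and a labelling $m\colon E\to\{2,3,\dots\}$; $G_\Gamma=\langle V \mid \mathrm{prod}(u,v,m(\{u,v\}))=\mathrm{prod}(v,u,m(\{u,v\}))\ \forall \{u,v\}\in E\rangle$, where $\mathrm{prod}(u,v,n)$ is the prefix of length $n$ of $uvuv\cdots$. An EAFC system has all labels even and among any three pairwise adjacent vertices at least two of the three edges have label $2$. For $S\subseteq V$, $G_S=\langle S\rangle$. The normalizer is $N_G(G_S)=\{g\in G\mid gG_Sg^{-1}=G_S\}$ and the quasi-centralizer is $QZ_G(G_S)=\{g\in G\mid gS=Sg\}$ (equality of subsets of $G$). *)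

(* Defs.v *)
(* Artin–Tits groups are encoded by their
   presentation: elements are words in V^{±1}, and equality in G_Gamma is the
   congruence generated by free cancellation and the Artin relations. *)
From mathcomp Require Import all_boot.
From Stdlib Require Import Relations.
Set Implicit Arguments. Unset Strict Implicit. Unset Printing Implicit Defensive.

Definition AT_system (V : finType) (E : rel V) (m : V -> V -> nat) : Prop :=
  [/\ forall u v, E u v = E v u,
      forall u, ~~ E u u,
      forall u v, E u v -> m u v = m v u
    & forall u v, E u v -> 2 <= m u v].

Definition EAFC_system (V : finType) (E : rel V) (m : V -> V -> nat) : Prop :=
  [/\ AT_system E m,
      forall u v, E u v -> ~~ odd (m u v)
    & forall u v w, E u v -> E v w -> E u w ->
        [|| (m u v == 2) && (m v w == 2),
            (m u v == 2) && (m u w == 2) | (m v w == 2) && (m u w == 2)]].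

(* letters: (v, false) = v, (v, true) = v^-1 *)
Definition word (V : finType) := seq (V * bool).

Definition letter (V : finType) (v : V) : word V := [:: (v, false)].

Fixpoint alt_prod (V : finType) (u v : V) (n : nat) : word V :=
  if n is n'.+1 then (u, false) :: alt_prod v u n' else [::].

Inductive at_rel (V : finType) (E : rel V) (m : V -> V -> nat)
  : word V -> word V -> Prop :=
| at_rel_cancel : forall (v : V) (b : bool), at_rel E m [:: (v, b); (v, ~~ b)] [::]
| at_rel_artin : forall u v : V, E u v ->
    at_rel E m (alt_prod u v (m u v)) (alt_prod v u (m u v)).

Definition at_step (V : finType) (E : rel V) (m : V -> V -> nat)
  (w1 w2 : word V) : Prop :=
  exists a b r1 r2, at_rel E m r1 r2 /\ w1 = a ++ r1 ++ b /\ w2 = a ++ r2 ++ b.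

Definition at_eq (V : finType) (E : rel V) (m : V -> V -> nat) : relation (word V) :=
  clos_refl_sym_trans (word V) (at_step E m).

Definition wmul (V : finType) (g h : word V) : word V := g ++ h.
Definition winv (V : finType) (g : word V) : word V :=
  rev [seq (x.1, ~~ x.2) | x <- g].

Definition in_parabolic (V : finType) (E : rel V) (m : V -> V -> nat)
  (S : {set V}) (g : word V) : Prop :=
  exists w : word V, all (fun x => x.1 \in S) w /\ at_eq E m g w.

Definition in_normalizer (V : finType) (E : rel V) (m : V -> V -> nat)
  (S : {set V}) (g : word V) : Prop :=
  (forall h, in_parabolic E m S h ->
     in_parabolic E m S (wmul (wmul g h) (winv g))) /\
  (forall h, in_parabolic E m S h ->
     exists h', in_parabolic E m S h' /\
       at_eq E m h (wmul (wmul g h') (winv g))).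

Definition in_quasi_centralizer (V : finType) (E : rel V) (m : V -> V -> nat)
  (S : {set V}) (g : word V) : Prop :=
  (forall s, s \in S -> exists t, t \in S /\
     at_eq E m (wmul g (letter s)) (wmul (letter t) g)) /\
  (forall t, t \in S -> exists s, s \in S /\
     at_eq E m (wmul (letter t) g) (wmul g (letter s))).

(* Main.v *)
Require Import Defs.
From Stdlib Require Import Relations Lia.
From mathcomp Require Import all_boot.
From mathcomp Require Import zify.
Set Implicit Arguments. Unset Strict Implicit. Unset Printing Implicit Defensive.

Section Aux.
Variables (V : finType) (E : rel V) (m : V -> V -> nat).
Notation eqw := (at_eq E m).

Lemma eqw_refl w : eqw w w. Proof. exact: rst_refl. Qed.
Lemma eqw_sym w1 w2 : eqw w1 w2 -> eqw w2 w1. Proof. exact: rst_sym. Qed.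
Lemma eqw_trans w1 w2 w3 : eqw w1 w2 -> eqw w2 w3 -> eqw w1 w3.
Proof. exact: rst_trans. Qed.

Lemma eqw_rel r1 r2 : at_rel E m r1 r2 -> eqw r1 r2.
Proof. move=> H; apply: rst_step; exists [::], [::], r1, r2; by rewrite /= !cats0. Qed.

Lemma eqw_cat_l a w1 w2 : eqw w1 w2 -> eqw (a ++ w1) (a ++ w2).
Proof.
elim => [x y [a' [b [r1 [r2 [H [-> ->]]]]]] | x | x y _ IH | x y z _ IH1 _ IH2].
- apply: rst_step; exists (a ++ a'), b, r1, r2; by rewrite -!catA.
- exact: eqw_refl.
- exact: eqw_sym.
- exact: eqw_trans IH2.
Qed.

Lemma eqw_cat_r b w1 w2 : eqw w1 w2 -> eqw (w1 ++ b) (w2 ++ b).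
Proof.
elim => [x y [a' [b' [r1 [r2 [H [-> ->]]]]]] | x | x y _ IH | x y z _ IH1 _ IH2].
- apply: rst_step; exists a', (b' ++ b), r1, r2; by rewrite -!catA.
- exact: eqw_refl.
- exact: eqw_sym.
- exact: eqw_trans IH2.
Qed.

Lemma eqw_cat a a' b b' : eqw a a' -> eqw b b' -> eqw (a ++ b) (a' ++ b').
Proof. move=> H1 H2; apply: eqw_trans (eqw_cat_r _ H1) (eqw_cat_l _ H2). Qed.

Lemma winv_cat (a b : word V) : winv (a ++ b) = winv b ++ winv a.
Proof. by rewrite /winv map_cat rev_cat. Qed.

Lemma winv_cons x (w : word V) : winv (x :: w) = winv w ++ [:: (x.1, ~~ x.2)].
Proof. by rewrite /winv /= rev_cons cats1. Qed.

Lemma winvK (w : word V) : winv (winv w) = w.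
Proof.
rewrite /winv map_rev revK -map_comp.
elim: w => [|[a b] w IH] //=; by rewrite IH negbK.
Qed.

Lemma winv_cancel w : eqw (w ++ winv w) [::].
Proof.
elim: w => [|[a b] w IH]; first exact: eqw_refl.
rewrite winv_cons /= catA.
apply: eqw_trans (_ : eqw ((a, b) :: [::] ++ [:: (a, ~~ b)]) _).
- have := eqw_cat_r [:: (a, ~~ b)] (eqw_cat_l [:: (a, b)] IH).
  by rewrite /= -catA.
- apply: eqw_rel; exact: at_rel_cancel.
Qed.

Lemma winv_cancel' w : eqw (winv w ++ w) [::].
Proof. by have := winv_cancel (winv w); rewrite winvK. Qed.

Lemma cancel_mid a w b : eqw (a ++ w ++ winv w ++ b) (a ++ b).
Proof.
apply: eqw_cat_l; rewrite catA.
exact: (eqw_cat_r b (winv_cancel w)).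
Qed.

Lemma cancel_mid' a w b : eqw (a ++ winv w ++ w ++ b) (a ++ b).
Proof.
apply: eqw_cat_l; rewrite catA.
exact: (eqw_cat_r b (winv_cancel' w)).
Qed.

Lemma alt_count p (u v : V) k :
  count p (alt_prod u v k.*2) = count p (alt_prod v u k.*2).
Proof.
elim: k => [|k IH] //; rewrite doubleS /= IH; lia.
Qed.

Lemma alt_filter (p : pred (V * bool)) (u v : V) k :
  ~~ (p (u, false) && p (v, false)) ->
  filter p (alt_prod u v k.*2) = filter p (alt_prod v u k.*2).
Proof.
move=> H; elim: k => [|k IH] //; rewrite doubleS /= IH.
by case: (p (u, false)) H; case: (p (v, false)).
Qed.

Lemma alt_all (p : pred (V * bool)) (u v : V) n :
  p (u, false) -> p (v, false) -> all p (alt_prod u v n).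
Proof.
elim: n u v => [|n IH] u v //= Hu Hv; rewrite Hu; exact: IH.
Qed.

Hypothesis Hev : forall u v, E u v -> ~~ odd (m u v).

Lemma m_double u v : E u v -> m u v = (m u v)./2.*2.
Proof. move=> H; by rewrite -[in LHS](odd_double_half (m u v)) (negbTE (Hev H)). Qed.

Definition P (v : V) (b : bool) (w : word V) := count (pred1 (v, b)) w.

Lemma inv_rel v r1 r2 : at_rel E m r1 r2 ->
  P v false r1 + P v true r2 = P v false r2 + P v true r1.
Proof.
case=> [x b | u w H].
- rewrite /P /= !xpair_eqE; case: b => /=; case: (x == v) => /=; lia.
- by rewrite /P (m_double H) [X in X + _ = _]alt_count [X in _ = _ + X]alt_count.
Qed.

Lemma inv_eqw v w1 w2 : eqw w1 w2 ->
  P v false w1 + P v true w2 = P v false w2 + P v true w1.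
Proof.
elim => [x y [a [b [r1 [r2 [H [-> ->]]]]]] | x | x y _ IH | x y z _ IH1 _ IH2].
- have := inv_rel v H; rewrite /P !count_cat; lia.
- lia.
- lia.
- lia.
Qed.

Lemma letter_eq g (s t : V) : eqw (g ++ letter s) (letter t ++ g) -> t = s.
Proof.
move=> H; have := inv_eqw s H; rewrite /P !count_cat /= eqxx /=.
case: (eqVneq t s) => // /negbTE Hts.
rewrite !xpair_eqE Hts /=; lia.
Qed.

Variable S : {set V}.
Definition rho (w : word V) := filter (fun x => x.1 \in S) w.

Lemma rho_cat a b : rho (a ++ b) = rho a ++ rho b.
Proof. exact: filter_cat. Qed.

Lemma rho_winv w : rho (winv w) = winv (rho w).
Proof.
rewrite /rho /winv filter_rev filter_map; congr (rev (map _ _)).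
Qed.

Lemma rho_all w : all (fun x => x.1 \in S) (rho w).
Proof. exact: filter_all. Qed.

Lemma rho_id w : all (fun x => x.1 \in S) w -> rho w = w.
Proof. by move/all_filterP. Qed.

Lemma rho_rel r1 r2 : at_rel E m r1 r2 -> eqw (rho r1) (rho r2).
Proof.
case=> [x b | u v H].
- rewrite /rho /=; case: (x \in S) => /=; last exact: eqw_refl.
  apply: eqw_rel; exact: at_rel_cancel.
- case Hu: (u \in S); case Hv: (v \in S).
  + rewrite !rho_id; first by apply: eqw_rel; exact: at_rel_artin.
    * exact: alt_all.
    * exact: alt_all.
  + rewrite /rho (m_double H) alt_filter /= ?Hu ?Hv //; exact: eqw_refl.
  + rewrite /rho (m_double H) alt_filter /= ?Hu ?Hv //; exact: eqw_refl.
  + rewrite /rho (m_double H) alt_filter /= ?Hu ?Hv //; exact: eqw_refl.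
Qed.

Lemma rho_eqw w1 w2 : eqw w1 w2 -> eqw (rho w1) (rho w2).
Proof.
elim => [x y [a [b [r1 [r2 [H [-> ->]]]]]] | x | x y _ IH | x y z _ IH1 _ IH2].
- rewrite !rho_cat; apply: eqw_cat_l; apply: eqw_cat_r; exact: rho_rel.
- exact: eqw_refl.
- exact: eqw_sym.
- exact: eqw_trans IH2.
Qed.

Lemma par_rho x : in_parabolic E m S x -> eqw x (rho x).
Proof.
case=> w [Hw Hx]; apply: (eqw_trans Hx).
have := rho_eqw (eqw_sym Hx); by rewrite (rho_id Hw).
Qed.

Lemma winv_all w : all (fun x => x.1 \in S) w -> all (fun x => x.1 \in S) (winv w).
Proof. by rewrite /winv all_rev all_map. Qed.

End Aux.

Theorem lemma2p12 (V : finType) (E : rel V) (m : V -> V -> nat) (S : {set V}) :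
  EAFC_system E m ->
  (forall g : word V,
     in_quasi_centralizer E m S g <->
     (forall s, s \in S -> in_quasi_centralizer E m [set s] g)) /\
  (forall g : word V,
     in_normalizer E m S g -> ~ in_parabolic E m S g ->
     exists g' : word V,
       in_normalizer E m S g' /\
       in_parabolic E m S (wmul (winv g) g') /\
       (forall h, in_parabolic E m S h -> at_eq E m (wmul g' h) (wmul h g'))).
Proof.
case=> _ Hev _; split.
- move=> g; split.
  + move=> [H1 H2] s Hs; split.
    * move=> s' /set1P ->; have [t [Ht Heq]] := H1 s Hs.
      have Hts := letter_eq Hev Heq; subst t.
      by exists s; rewrite set11.
    * move=> t /set1P ->; have [t' [Ht Heq]] := H1 s Hs.
      have Hts := letter_eq Hev Heq; subst t'.
      by exists s; rewrite set11; split => //; exact: eqw_sym.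
  + move=> H; split.
    * move=> s Hs; have [t [/set1P -> Heq]] := (H s Hs).1 s (set11 s).
      by exists s.
    * move=> t Ht; have [s [/set1P -> Heq]] := (H t Ht).2 t (set11 t).
      by exists t.
- move=> g [Hn1 Hn2] _.
  set h := rho S g.
  set g' := g ++ winv h.
  have C : forall x, in_parabolic E m S x -> at_eq E m (g' ++ x ++ winv g') x.
  { move=> x Hx.
    have [x' [Hx' Heq]] := Hn2 x Hx.
    move: Heq; rewrite /wmul -!catA => Heq.
    have R := @rho_eqw _ _ _ Hev S _ _ Heq; rewrite !rho_cat rho_winv -/h in R.
    have R2 : at_eq E m x (h ++ x' ++ winv h).
    { apply: eqw_trans (@par_rho _ _ _ Hev S _ Hx) _; apply: eqw_trans R _.
      apply: eqw_cat_l; apply: eqw_cat_r; apply: eqw_sym; exact: par_rho. }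
    have R3 : at_eq E m (winv h ++ x ++ h) x'.
    { apply: eqw_trans (_ : at_eq E m (winv h ++ (h ++ x' ++ winv h) ++ h) _).
      - apply: eqw_cat_l; apply: eqw_cat_r; exact: R2.
      - rewrite -!catA; apply: eqw_trans (@cancel_mid' V E m [::] h (x' ++ winv h ++ h)) _.
        apply: eqw_trans (eqw_cat_l x' (@winv_cancel' V E m h)) _.
        rewrite cats0; exact: eqw_refl. }
    rewrite /g' winv_cat winvK -?catA.
    apply: eqw_trans (_ : at_eq E m (g ++ x' ++ winv g) _); last exact: eqw_sym.
    apply: eqw_cat_l; rewrite !catA; apply: eqw_cat_r; rewrite -!catA; exact: R3. }
  have Cc : forall x, in_parabolic E m S x -> at_eq E m (g' ++ x) (x ++ g').
  { move=> x Hx.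
    apply: eqw_trans (_ : at_eq E m ((g' ++ x ++ winv g') ++ g') _).
    - apply: eqw_sym.
      have := @cancel_mid' V E m (g' ++ x) g' [::]; rewrite !cats0 -!catA; exact.
    - apply: eqw_cat_r; exact: C. }
  exists g'; split; [split|split].
  + move=> x Hx; have [w [Hw Hxw]] := Hx; exists w; split => //.
    rewrite /wmul -catA; exact: eqw_trans (C x Hx) Hxw.
  + move=> x Hx; exists x; split => //; rewrite /wmul -catA; apply: eqw_sym; exact: C.
  + exists (winv h); split; first by apply: winv_all; apply: rho_all.
    rewrite /wmul /g'.
    exact: (@cancel_mid' V E m [::] g (winv h)).
  + move=> x Hx; exact: Cc.
Qed.
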